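(* Consider a complex-balanced mass action chemical reaction network $\Sigma$: $\dot x=-Z\mathcal{L}(x^* )\,\mathrm{Exp}(Z^T\mathrm{Ln}(x/x^* ))$ with complex-equilibrium $x^*\in\mathbb{R}_+^m$. Let $\mathcal{V}_r$ be a set of complexes to be deleted; order the complexes so that those in $\mathcal{V}_r$ come last, partition \[ \mathcal{L}(x^* )=\begin{bmatrix}\mathcal{L}_{11}&\mathcal{L}_{12}\\ \mathcal{L}_{21}&\mathcal{L}_{22}\end{bmatrix},\qquad Z=\begin{bmatrix}Z_1 & Z_2\end{bmatrix} \] accordingly (the second blocks corresponding to $\mathcal{V}_r$), assume $\mathcal{L}_{22}$ is invertible, and let $\hat{\mathcal{L}}(x^* )=\mathcal{L}_{11}-\mathcal{L}_{12}\mathcal{L}_{22}^{-1}\mathcal{L}_{21}$ and $\hat Z=Z_1$. Define the reduced network $\hat\Sigma$: $\dot x=-\hat Z\hat{\mathcal{L}}(x^* )\,\mathrm{Exp}(\hat Z^T\mathrm{Ln}(x/x^* ))$. Let $\mathcal{E}$ and $\hat{\mathcal{E}}$ be the sets of equilibria in $\mathbb{R}_+^m$ of $\Sigma$ and $\hat\Sigma$ respectively. Then $\mathcal{E}\subseteq\hat{\mathcal{E}}$.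
   Context: A mass action chemical reaction network has $m$ species with concentration vector $x\in\mathbb{R}_+^m$ (strictly positive entries), $c$ complexes and $r$ reactions. The complex-stoichiometric matrix $Z\in\mathbb{R}^{m\times c}$ has nonnegative integer entries; its $\alpha$-th column $Z_\alpha$ gives the composition of complex $\alpha$. The graph of complexes has the complexes as vertices and a directed edge for each reaction $j$ from its substrate complex $\mathcal{S}_j$ to its product complex $\mathcal{P}_j$; its incidence matrix $B\in\mathbb{R}^{c\times r}$ has $(\alpha,j)$ entry $-1$ if $\alpha=\mathcal{S}_j$, $+1$ if $\alpha=\mathcal{P}_j$, $0$ otherwise. Reaction $j$ has rate constant $k_j>0$ and rate $v_j(x)=k_j\exp(Z_{\mathcal{S}_j}^T\mathrm{Ln}(x))$. $\mathrm{Ln}$ and $\mathrm{Exp}$ are componentwise logarithm and exponential, $x/x^*$ is componentwise division. With $a_{\pi\sigma}=\sum\{k_j:\mathcal{S}_j=\sigma,\mathcal{P}_j=\pi\}$, $A=(a_{\pi\sigma})$, $\Delta$ diagonal with entries the column sums of $A$, $L=\Delta-A$, the mass action dynamics $\dot x=ZBv(x)$ equal $\dot x=-ZL\,\mathrm{Exp}(Z^T\mathrm{Ln}(x))$. A complex-equilibrium is $x^*\in\mathbb{R}_+^m$ with $Bv(x^* )=0$; the network is complex-balanced if one exists. The weighted Laplacian is $\mathcal{L}(x^* )=L\,\mathrm{diag}_{i=1}^c(\exp(Z_i^T\mathrm{Ln}(x^* )))$; it has zero row and column sums, and with it the dynamics $\dot x=ZBv(x)$ take the form $\dot x=-Z\mathcal{L}(x^*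 )\mathrm{Exp}(Z^T\mathrm{Ln}(x/x^* ))$. An equilibrium of a system $\dot x=f(x)$ is a point $x\in\mathbb{R}_+^m$ with $f(x)=0$. *)

(* Defs.v *)
From HB Require Import structures.
From mathcomp Require Import all_boot all_order all_algebra.
From mathcomp Require Import all_classical all_reals all_analysis.
Set Implicit Arguments. Unset Strict Implicit. Unset Printing Implicit Defensive.
Import Order.TTheory GRing.Theory Num.Theory.
Local Open Scope ring_scope.

Section CRN.
Variable R : realType.

Definition Ln (n : nat) (x : 'cV[R]_n) : 'cV[R]_n := map_mx (@ln R) x.
Definition Exp (n : nat) (x : 'cV[R]_n) : 'cV[R]_n := map_mx (@expR R) x.

Definition cdiv (n : nat) (x y : 'cV[R]_n) : 'cV[R]_n := \col_i (x i 0 / y i 0).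

Definition positive (n : nat) (x : 'cV[R]_n) : Prop := forall i, 0 < x i 0.

(* A mass action network: m species, c complexes, r reactions;
   Z : complex-stoichiometric matrix, S j / P j : substrate / product complex
   of reaction j, k j : rate constant of reaction j. *)

Definition rateA (c r : nat) (S P : 'I_r -> 'I_c) (k : 'I_r -> R) : 'M[R]_c :=
  \matrix_(p, s) \sum_(j | (S j == s) && (P j == p)) k j.

Definition rateDelta (c r : nat) (S P : 'I_r -> 'I_c) (k : 'I_r -> R) : 'M[R]_c :=
  \matrix_(p, s) ((p == s)%:R * \sum_q rateA S P k q s).

Definition lapL (c r : nat) (S P : 'I_r -> 'I_c) (k : 'I_r -> R) : 'M[R]_c :=
  rateDelta S P k - rateA S P k.

Definition incB (c r : nat) (S P : 'I_r -> 'I_c) : 'M[R]_(c, r) :=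
  \matrix_(a, j) ((a == P j)%:R - (a == S j)%:R).

Definition rates (m c r : nat) (Z : 'M[R]_(m, c)) (S : 'I_r -> 'I_c)
  (k : 'I_r -> R) (x : 'cV[R]_m) : 'cV[R]_r :=
  \col_j (k j * expR (((col (S j) Z)^T *m Ln x) 0 0)).

Definition complex_equilibrium (m c r : nat) (Z : 'M[R]_(m, c))
  (S P : 'I_r -> 'I_c) (k : 'I_r -> R) (xs : 'cV[R]_m) : Prop :=
  positive xs /\ incB S P *m rates Z S k xs = 0.

Definition weightedL (m c r : nat) (Z : 'M[R]_(m, c))
  (S P : 'I_r -> 'I_c) (k : 'I_r -> R) (xs : 'cV[R]_m) : 'M[R]_c :=
  lapL S P k *m diag_mx (Exp (Z^T *m Ln xs))^T.

Definition crn_field (m c : nat) (Z : 'M[R]_(m, c)) (Lw : 'M[R]_c)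
  (xs x : 'cV[R]_m) : 'cV[R]_m :=
  - (Z *m Lw *m Exp (Z^T *m Ln (cdiv x xs))).

Definition is_equilibrium (m : nat) (f : 'cV[R]_m -> 'cV[R]_m) (x : 'cV[R]_m) : Prop :=
  positive x /\ f x = 0.

Definition kron_reduce (c1 c2 : nat) (Lw : 'M[R]_(c1 + c2)) : 'M[R]_c1 :=
  ulsubmx Lw - ursubmx Lw *m invmx (drsubmx Lw) *m dlsubmx Lw.

End CRN.

(* Main.v *)
Require Import Defs.
From HB Require Import structures.
From mathcomp Require Import all_boot all_order all_algebra.
From mathcomp Require Import all_classical all_reals all_analysis.
From mathcomp Require Import ring lra.
Import Order.TTheory GRing.Theory Num.Theory.
Local Open Scope ring_scope.

Section Aux.
Variable R : realType.

Lemma expR_aux (a b : R) :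
  expR a * (a - b) - expR a + expR b = expR a * (expR (b - a) - 1 - (b - a)).
Proof. have -> : expR b = expR (b - a) * expR a by rewrite -expRD subrK. ring. Qed.

Lemma expR_aux_ge0 (a b : R) : 0 <= expR a * (a - b) - expR a + expR b.
Proof.
rewrite expR_aux mulr_ge0 ?expR_ge0 //.
have := expR_ge1Dx (b - a); lra.
Qed.

Lemma expR_aux_eq0 (a b : R) : expR a * (a - b) - expR a + expR b = 0 -> a = b.
Proof.
rewrite expR_aux => /eqP; rewrite mulf_eq0 gt_eqF ?expR_gt0 //= subr_eq0 => /eqP H.
have [E|ne] := eqVneq (b - a) 0; first by apply/eqP; rewrite eq_sym -subr_eq0 E.
have := expR_gt1Dx ne; lra.
Qed.

Lemma key n (M : 'M[R]_n) (g : 'I_n -> R) :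
  (forall i j, i != j -> M i j <= 0) ->
  (forall j, \sum_i M i j = 0) ->
  (forall i, \sum_j M i j = 0) ->
  \sum_i \sum_j g i * M i j * expR (g j) = 0 ->
  forall i, \sum_j M i j * expR (g j) = 0.
Proof.
move=> Hoff Hcol Hrow Hsum.
pose t i j := - M i j * (expR (g j) * (g j - g i) - expR (g j) + expR (g i)).
have tge0 i j : 0 <= t i j.
  rewrite /t; have [->|ne] := eqVneq i j.
    by rewrite subrr mulr0 add0r addrC subrr mulr0.
  by rewrite mulr_ge0 ?expR_aux_ge0 // oppr_ge0 Hoff.
have tE i j : t i j = g i * M i j * expR (g j)
   + M i j * (expR (g j) - expR (g j) * g j) - M i j * expR (g i).
  rewrite /t; ring.
have St : \sum_i \sum_j t i j = 0.
  have -> : \sum_i \sum_j t i j = \sum_i \sum_j g i * M i j * expR (g j)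
      + \sum_i \sum_j M i j * (expR (g j) - expR (g j) * g j) - \sum_i \sum_j M i j * expR (g i).
    rewrite -big_split -sumrB /=; apply: eq_bigr => i _.
    rewrite -big_split -sumrB /=; apply: eq_bigr => j _; exact: tE.
  rewrite Hsum.
  have -> : \sum_i \sum_j M i j * (expR (g j) - expR (g j) * g j) = 0.
    rewrite exchange_big /= big1 // => j _; by rewrite -mulr_suml Hcol mul0r.
  have -> : \sum_i \sum_j M i j * expR (g i) = 0.
    rewrite big1 // => i _; by rewrite -mulr_suml Hrow mul0r.
  by rewrite addr0 subr0.
have t0 i j : t i j = 0.
  move/eqP: St; rewrite psumr_eq0 => [/allP/(_ i)|]; last first.
    by move=> i' _; rewrite sumr_ge0.
  rewrite mem_index_enum => /(_ isT) /implyP /(_ isT).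
  rewrite psumr_eq0 => [/allP/(_ j)|]; last by [].
  by rewrite mem_index_enum => /(_ isT) /implyP /(_ isT) /eqP.
move=> i.
have -> : \sum_j M i j * expR (g j) = \sum_j M i j * (expR (g j) - expR (g i)).
  by rewrite (eq_bigr _ (fun j _ => mulrBr _ _ _)) sumrB -mulr_suml Hrow mul0r subr0.
apply: big1 => j _.
have [->|Mne] := eqVneq (M i j) 0; first by rewrite mul0r.
have := t0 i j; rewrite /t => /eqP; rewrite mulf_eq0 oppr_eq0 (negbTE Mne) /= => /eqP/expR_aux_eq0 ->.
by rewrite subrr mulr0.
Qed.

Lemma sum_delta (T : finType) (a : T) (f : T -> R) :
  \sum_q (if q == a then f q else 0) = f a.
Proof. by rewrite -big_mkcond /= big_pred1_eq. Qed.

Lemma sum_delta' (T : finType) (a : T) (f : T -> R) :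
  \sum_q (if a == q then f q else 0) = f a.
Proof. rewrite -(sum_delta _ a f); apply: eq_bigr => q _; by rewrite eq_sym. Qed.

Lemma rateA_ge0 c r (S P : 'I_r -> 'I_c) (k : 'I_r -> R) :
  (forall j, 0 < k j) -> forall p s, 0 <= rateA S P k p s.
Proof. move=> Hk p s; rewrite mxE sumr_ge0 // => j _; exact: ltW. Qed.

Lemma lapL_off c r (S P : 'I_r -> 'I_c) (k : 'I_r -> R) i j :
  i != j -> lapL S P k i j = - rateA S P k i j.
Proof. by move=> ne; rewrite !mxE (negbTE ne) mul0r sub0r. Qed.

Lemma colA c r (S P : 'I_r -> 'I_c) (k : 'I_r -> R) s :
  \sum_q rateA S P k q s = \sum_l (if S l == s then k l else 0).
Proof.
under eq_bigr do rewrite mxE big_mkcond.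
rewrite exchange_big /=; apply: eq_bigr => l _.
case: (S l == s) => /=; last by rewrite big1.
exact: (sum_delta' _ (P l) (fun _ => k l)).
Qed.

Lemma lapLE c r (S P : 'I_r -> 'I_c) (k : 'I_r -> R) i j :
  lapL S P k i j = (i == j)%:R * \sum_q rateA S P k q j - rateA S P k i j.
Proof. rewrite /lapL /rateDelta !mxE; exact: erefl. Qed.

Lemma lapL_col c r (S P : 'I_r -> 'I_c) (k : 'I_r -> R) j :
  \sum_i lapL S P k i j = 0.
Proof.
under eq_bigr do rewrite lapLE.
rewrite sumrB; apply/eqP; rewrite subr_eq0; apply/eqP.
rewrite (eq_bigr (fun i => if i == j then \sum_q rateA S P k q j else 0)).
  by rewrite sum_delta.
by move=> i _; case: (i == j); rewrite ?mul1r ?mul0r.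
Qed.

Lemma lapL_row c r (S P : 'I_r -> 'I_c) (k : 'I_r -> R) (w : 'I_c -> R) i :
  \sum_j lapL S P k i j * w j
  = \sum_l ((S l == i)%:R - (P l == i)%:R) * k l * w (S l).
Proof.
under eq_bigr do rewrite lapLE mulrBl.
rewrite sumrB.
have -> : \sum_j (i == j)%:R * (\sum_q rateA S P k q j) * w j = \sum_l (S l == i)%:R * k l * w (S l).
  rewrite (eq_bigr (fun j => if j == i then (\sum_q rateA S P k q i) * w i else 0)).
    rewrite sum_delta colA mulr_suml; apply: eq_bigr => l _.
    by case: eqP => [->|_]; rewrite ?mul1r ?mul0r.
  move=> j _; case: (eqVneq i j) => [->|ne]; first by rewrite ?eqxx mul1r.
  by rewrite ?eq_sym ?(negbTE ne) !mul0r.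
have -> : \sum_j rateA S P k i j * w j = \sum_l (P l == i)%:R * k l * w (S l).
  under eq_bigr do rewrite mxE big_mkcond mulr_suml.
  rewrite exchange_big /=; apply: eq_bigr => l _.
  rewrite (eq_bigr (fun j => if S l == j then (P l == i)%:R * k l * w (S l) else 0)).
    by rewrite (sum_delta' _ (S l) (fun _ => _)).
  move=> j _; case: (eqVneq (S l) j) => [->|ne] /=; last by rewrite mul0r.
  by case: (P l == i); rewrite /= ?mul1r ?mul0r.
rewrite -sumrB; apply: eq_bigr => l _; ring.
Qed.
End Aux.

Theorem proposition3 (R : realType) (m c1 c2 r : nat)
  (Z : 'M[R]_(m, c1 + c2))
  (S P : 'I_r -> 'I_(c1 + c2)) (k : 'I_r -> R) (xs : 'cV[R]_m) :
  (forall i j, exists n : nat, Z i j = n%:R) ->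
  (forall j, S j != P j) ->
  (forall j, 0 < k j) ->
  complex_equilibrium Z S P k xs ->
  drsubmx (weightedL Z S P k xs) \in unitmx ->
  forall x : 'cV[R]_m,
    is_equilibrium (crn_field Z (weightedL Z S P k xs) xs) x ->
    is_equilibrium (crn_field (lsubmx Z) (kron_reduce (weightedL Z S P k xs)) xs) x.
Proof.
move=> _ _ Hk [Hxs HB] Hunit x [Hx Hf]; split => //.
set Lw := weightedL Z S P k xs in Hf Hunit *.
set g := Z^T *m Ln (cdiv x xs).
have LwE i j : Lw i j = lapL S P k i j * expR ((Z^T *m Ln xs) j 0).
  rewrite /Lw /weightedL mul_mx_diag mxE; congr (_ * _).
  by rewrite mxE /Exp mxE.
have Hly : Lw *m Exp g = 0.
  apply/matrixP => i j; rewrite (ord1 j) [in RHS]mxE mxE.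
  under eq_bigr do rewrite [Exp g _ _]mxE.
  apply: (@key _ _ _ (fun j => g j 0)) => {i}.
  - move=> i0 j0 ne; rewrite LwE lapL_off // mulNr oppr_le0 mulr_ge0 ?rateA_ge0 ?expR_ge0 //.
  - move=> j0; under eq_bigr do rewrite LwE; by rewrite -mulr_suml lapL_col mul0r.
  - move=> i0; under eq_bigr do rewrite LwE; rewrite lapL_row.
    transitivity (- (incB R S P *m rates Z S k xs) i0 0); last by rewrite HB mxE oppr0.
    rewrite mxE -sumrN; apply: eq_bigr => l _; rewrite !mxE.
    have -> : \sum_j0 (col (S l) Z)^T 0 j0 * Ln xs j0 0 = \sum_j0 Z^T (S l) j0 * Ln xs j0 0.
      by apply: eq_bigr => q _; rewrite !mxE.
    rewrite (eq_sym i0) (eq_sym i0); ring.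
  - have H0 : g^T *m (Lw *m Exp g) = 0.
      move: Hf; rewrite /crn_field -/g => /eqP; rewrite oppr_eq0 => /eqP Hf.
      have gT : g^T = (Ln (cdiv x xs))^T *m Z by rewrite /g trmx_mul trmxK.
      by rewrite gT -(mulmxA _ Z) (mulmxA Z) Hf mulmx0.
    transitivity ((g^T *m (Lw *m Exp g)) 0 0); last by rewrite H0 mxE.
    rewrite mxE; apply: eq_bigr => i _.
    have -> : g^T 0 i = g i 0 by rewrite mxE.
    have -> : (Lw *m Exp g) i 0 = \sum_j Lw i j * Exp g j 0 by rewrite mxE.
    rewrite mulr_sumr; apply: eq_bigr => j0 _.
    have -> : Exp g j0 0 = expR (g j0 0) by rewrite /Exp mxE.
    by rewrite mulrA.
rewrite /crn_field.
have E1 : Exp ((lsubmx Z)^T *m Ln (cdiv x xs)) = usubmx (Exp g).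
  by rewrite trmx_lsub mul_usub_mx /Exp map_usubmx.
rewrite E1 -mulmxA.
rewrite -[Exp g](vsubmxK) -[Lw]submxK mul_block_col in Hly.
move/eqP: Hly; rewrite col_mx_eq0 => /andP[/eqP H1 /eqP H2].
have H3 : dlsubmx Lw *m usubmx (Exp g) = - (drsubmx Lw *m dsubmx (Exp g)).
  by apply/eqP; rewrite -addr_eq0 H2.
rewrite /kron_reduce mulmxBl -!mulmxA H3 mulmxN mulKmx // mulmxN opprK H1.
by rewrite mulmx0 oppr0.
Qed.
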